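(* Let $\boldsymbol{\Xi} = \begin{bmatrix}\boldsymbol{\alpha}_1 & \boldsymbol{\alpha}_2 & \boldsymbol{\alpha}_3\\ \boldsymbol{\beta}_1 & \boldsymbol{\beta}_2 & \boldsymbol{\beta}_3\end{bmatrix}\in\mathbb{R}^{6\times 3}$ (with $\boldsymbol{\alpha}_j,\boldsymbol{\beta}_j\in\mathbb{R}^3$) satisfy $\Vert\boldsymbol{\alpha}_1\Vert\neq 0$ and $\boldsymbol{\alpha}_1\times\boldsymbol{\alpha}_2\neq\boldsymbol{0}$, and let $\boldsymbol{\Xi}=\boldsymbol{S}\boldsymbol{U}$ be its unique $SU$-decomposition, with $\boldsymbol{S}=\begin{bmatrix}\boldsymbol{R} & \boldsymbol{0}\\ [\boldsymbol{p}]_\times\boldsymbol{R} & \boldsymbol{R}\end{bmatrix}$ and $\boldsymbol{R}=[\boldsymbol{r}_1\ \boldsymbol{r}_2\ \boldsymbol{r}_3]$. Then: (1) $\boldsymbol{r}_1$ is parallel to the screw axis of $\boldsymbol{\xi}_1=(\boldsymbol{\alpha}_1;\boldsymbol{\beta}_1)$; (2) $\boldsymbol{r}_3$ is parallel to the common normal of the screw axes of $\boldsymbol{\xi}_1$ and $\boldsymbol{\xi}_2=(\boldsymbol{\alpha}_2;\boldsymbol{\beta}_2)$; (3) $\boldsymbol{p}$ lies on the screw axis of $\boldsymbol{\xi}_1$; (4) $\boldsymbol{p}$ is the intersection point of the screw axis of $\boldsymbol{\xi}_1$ with the common normal of the screw axes of $\boldsymbol{\xi}_1$ and $\boldsymb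ol{\xi}_2$.
   Context: For $\boldsymbol{a}\in\mathbb{R}^3$, $[\boldsymbol{a}]_\times$ denotes the skew-symmetric matrix with $[\boldsymbol{a}]_\times\boldsymbol{b}=\boldsymbol{a}\times\boldsymbol{b}$. A screw-transformation matrix is a $6\times6$ matrix $\begin{bmatrix}\boldsymbol{R} & \boldsymbol{0}\\ [\boldsymbol{p}]_\times\boldsymbol{R} & \boldsymbol{R}\end{bmatrix}$ with $\boldsymbol{R}\in SO(3)$, $\boldsymbol{p}\in\mathbb{R}^3$. An $SU$-decomposition of $\boldsymbol{\Xi}$ is a factorization $\boldsymbol{\Xi}=\boldsymbol{S}\boldsymbol{U}$ with $\boldsymbol{S}$ a screw-transformation matrix and $\boldsymbol{U}=\begin{bmatrix}\boldsymbol{U}_1\\ \boldsymbol{U}_2\end{bmatrix}$, where $\boldsymbol{U}_1,\boldsymbol{U}_2$ are $3\times3$ upper-triangular with $(\boldsymbol{U}_1)_{11}>0$, $(\boldsymbol{U}_1)_{22}>0$; it exists and is unique under the stated conditions. For a screw $\boldsymbol{\xi}=(\boldsymbol{\alpha};\boldsymbol{\beta})\in\mathbb{R}^6$ with $\boldsymbol{\alpha}\neq\boldsymbol{0}$, its screw axis is the line $\{\boldsymbol{p}_\perp + t\,\boldsymbol{e} : t\in\mathbb{R}\}$ in $\mathbb{R}^3$, where $\boldsymbol{e}=\boldsymbol{\alpha}/\Vert\boldsymbol{\alpha}\Vert$ and $\boldsymbol{p}_\perp = (\boldsymbol{\alpha}\times\boldsymbol{\beta})/\Vert\boldsymbol{\alpha}\Vert^2$.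 The common normal of two non-parallel lines is the unique line that intersects both lines perpendicularly. *)

(* Defs.v *)
From HB Require Import structures.
From mathcomp Require Import all_boot all_order all_algebra.
From mathcomp Require Import reals.
Set Implicit Arguments. Unset Strict Implicit. Unset Printing Implicit Defensive.
Import Order.TTheory GRing.Theory Num.Theory.
Local Open Scope ring_scope.

Section Defs.
Variable R : realType.

Definition i0 : 'I_3 := @Ordinal 3 0 isT.
Definition i1 : 'I_3 := @Ordinal 3 1 isT.
Definition i2 : 'I_3 := @Ordinal 3 2 isT.

Definition c3 (a : 'cV[R]_3) (k : nat) : R := a (inord k) 0.

(* [a]_x : skew-symmetric matrix with [a]_x b = a x b *)
Definition skew (a : 'cV[R]_3) : 'M[R]_3 :=
  \matrix_(i < 3, j < 3)
    match nat_of_ord i, nat_of_ord j with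
    | 0, 1 => - c3 a 2 | 0, 2 => c3 a 1
    | 1, 0 => c3 a 2   | 1, 2 => - c3 a 0
    | 2, 0 => - c3 a 1 | 2, 1 => c3 a 0
    | _, _ => 0
    end.

Definition cross (a b : 'cV[R]_3) : 'cV[R]_3 := skew a *m b.
Definition dot (a b : 'cV[R]_3) : R := \sum_(i < 3) a i 0 * b i 0.
Definition vnorm (a : 'cV[R]_3) : R := Num.sqrt (dot a a).

Definition is_SO3 (M : 'M[R]_3) : Prop := M^T *m M = 1%:M /\ \det M = 1.

Definition upper_tri (M : 'M[R]_3) : Prop := forall i j : 'I_3, (j < i)%N -> M i j = 0.

Definition screw_mx (M : 'M[R]_3) (p : 'cV[R]_3) : 'M[R]_(3 + 3) :=
  block_mx M 0 (skew p *m M) M.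

Definition axis_dir (alpha : 'cV[R]_3) : 'cV[R]_3 := (vnorm alpha)^-1 *: alpha.
Definition axis_point (alpha beta : 'cV[R]_3) : 'cV[R]_3 :=
  (vnorm alpha ^+ 2)^-1 *: cross alpha beta.

Definition on_line (q d x : 'cV[R]_3) : Prop := exists t : R, x = q + t *: d.

Definition parallel (v d : 'cV[R]_3) : Prop := exists k : R, v = k *: d.

Definition common_normal (q1 d1 q2 d2 q d : 'cV[R]_3) : Prop :=
  [/\ d != 0, dot d d1 = 0, dot d d2 = 0,
      exists x, on_line q1 d1 x /\ on_line q d x &
      exists y, on_line q2 d2 y /\ on_line q d y].

End Defs.

(* Main.v *)
Require Import Defs.
From HB Require Import structures.
From mathcomp Require Import all_boot all_order all_algebra.
From mathcomp Require Import reals.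
From mathcomp Require Import ring lra.
Set Implicit Arguments. Unset Strict Implicit. Unset Printing Implicit Defensive.
Import Order.TTheory GRing.Theory Num.Theory.
Local Open Scope ring_scope.

Lemma ord3 (i : 'I_3) : i = i0 \/ i = i1 \/ i = i2.
Proof.
case: i => [[|[|[|m]]] Hi]; [left|right;left|right;right|] => //; try by apply: val_inj.
Qed.

Lemma sum3 (R : realType) (F : 'I_3 -> R) : \sum_(i < 3) F i = F i0 + F i1 + F i2.
Proof.
rewrite !big_ord_recr big_ord0 /= add0r; congr (F _ + F _ + F _); exact: val_inj.
Qed.

Lemma c3E (R : realType) (a : 'cV[R]_3) :
  [/\ c3 a 0 = a i0 0, c3 a 1 = a i1 0 & c3 a 2 = a i2 0].
Proof.
by rewrite /c3; split; congr (a _ _); apply: val_inj; rewrite /= inordK.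
Qed.

Lemma in0 : inord 0 = i0. Proof. by apply: val_inj; rewrite /= inordK. Qed.
Lemma in1 : inord 1 = i1. Proof. by apply: val_inj; rewrite /= inordK. Qed.
Lemma in2 : inord 2 = i2. Proof. by apply: val_inj; rewrite /= inordK. Qed.

Lemma vec3_eq (R : realType) (a b : 'cV[R]_3) :
  a i0 0 = b i0 0 -> a i1 0 = b i1 0 -> a i2 0 = b i2 0 -> a = b.
Proof.
move=> h0 h1 h2; apply/matrixP => i j; rewrite (ord1 j).
by case: (ord3 i) => [->|[->|->]].
Qed.

Ltac simp3 := rewrite /Defs.cross /Defs.dot /Defs.skew ?(mxE, sum3) /=; rewrite ?(mxE, sum3) /=;
  rewrite ?(mxE, sum3) /=;
  rewrite /c3 ?in0 ?in1 ?in2 ?mxE.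
Ltac vec3 := apply: vec3_eq; simp3; ring.

Lemma crossC (R : realType) (a b : 'cV[R]_3) : cross a b = - cross b a.
Proof. vec3. Qed.
Lemma bac_cab (R : realType) (a b c : 'cV[R]_3) :
  cross a (cross b c) = dot a c *: b - dot a b *: c.
Proof. vec3. Qed.
Lemma cross_aa (R : realType) (a : 'cV[R]_3) : cross a a = 0.
Proof. vec3. Qed.
Lemma crossDl (R : realType) (a b c : 'cV[R]_3) : cross (a + b) c = cross a c + cross b c.
Proof. vec3. Qed.
Lemma crossDr (R : realType) (a b c : 'cV[R]_3) : cross c (a + b) = cross c a + cross c b.
Proof. vec3. Qed.
Lemma crossZl (R : realType) k (a c : 'cV[R]_3) : cross (k *: a) c = k *: cross a c.
Proof. vec3. Qed.
Lemma crossZr (R : realType) k (a c : 'cV[R]_3) : cross c (k *: a) = k *: cross c a.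
Proof. vec3. Qed.
Lemma dotC (R : realType) (a b : 'cV[R]_3) : dot a b = dot b a.
Proof. simp3; ring. Qed.
Lemma dotDl (R : realType) (a b c : 'cV[R]_3) : dot (a + b) c = dot a c + dot b c.
Proof. simp3; ring. Qed.
Lemma dotDr (R : realType) (a b c : 'cV[R]_3) : dot c (a + b) = dot c a + dot c b.
Proof. simp3; ring. Qed.
Lemma dotZl (R : realType) k (a c : 'cV[R]_3) : dot (k *: a) c = k * dot a c.
Proof. simp3; ring. Qed.
Lemma dotZr (R : realType) k (a c : 'cV[R]_3) : dot c (k *: a) = k * dot c a.
Proof. simp3; ring. Qed.
Lemma dotNl (R : realType) (a c : 'cV[R]_3) : dot (- a) c = - dot a c.
Proof. simp3; ring. Qed.
Lemma dotNr (R : realType) (a c : 'cV[R]_3) : dot c (- a) = - dot c a.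
Proof. simp3; ring. Qed.
Lemma dot0r (R : realType) (c : 'cV[R]_3) : dot c 0 = 0.
Proof. simp3; ring. Qed.
Lemma dot_cross1 (R : realType) (a b : 'cV[R]_3) : dot (cross a b) a = 0.
Proof. simp3; ring. Qed.
Lemma dot_cross2 (R : realType) (a b : 'cV[R]_3) : dot (cross a b) b = 0.
Proof. simp3; ring. Qed.
Lemma mulmx_col3 (R : realType) (M : 'M[R]_3) (w : 'cV[R]_3) :
  M *m w = w i0 0 *: col i0 M + w i1 0 *: col i1 M + w i2 0 *: col i2 M.
Proof. apply: vec3_eq; rewrite !mxE ?sum3 ?mxE; ring. Qed.
Lemma trmx_mul_col (R : realType) (M : 'M[R]_3) (v : 'cV[R]_3) i :
  (M^T *m v) i 0 = dot (col i M) v.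
Proof. rewrite /Defs.dot !mxE; apply: eq_bigr => k _; rewrite !mxE. done. Qed.
Lemma trmx_mul_dot (R : realType) (M : 'M[R]_3) i j :
  (M^T *m M) i j = dot (col i M) (col j M).
Proof. rewrite /Defs.dot !mxE; apply: eq_bigr => k _; rewrite !mxE. done. Qed.
Lemma complete (R : realType) (M : 'M[R]_3) (v : 'cV[R]_3) :
  M^T *m M = 1%:M ->
  v = dot (col i0 M) v *: col i0 M + dot (col i1 M) v *: col i1 M + dot (col i2 M) v *: col i2 M.
Proof.
move=> /mulmx1C H.
by rewrite -{1}(mul1mx v) -H -mulmxA mulmx_col3 !trmx_mul_col.
Qed.
Lemma col_mulmx (R : realType) (A B : 'M[R]_3) j : col j (A *m B) = A *m col j B.
Proof. by rewrite !colE mulmxA. Qed.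
Lemma col_addmx (R : realType) (A B : 'M[R]_3) j : col j (A + B) = col j A + col j B.
Proof. by apply/matrixP => i k; rewrite !mxE. Qed.
Lemma span_cross0 (R : realType) (a b : 'cV[R]_3) x y x' y' :
  dot (cross (x *: a + y *: b) (x' *: a + y' *: b)) a = 0.
Proof. simp3; ring. Qed.
Lemma span_cross1 (R : realType) (a b : 'cV[R]_3) x y x' y' :
  dot (cross (x *: a + y *: b) (x' *: a + y' *: b)) b = 0.
Proof. simp3; ring. Qed.
Lemma cross_skew (R : realType) (p a : 'cV[R]_3) : Defs.skew p *m a = cross p a.
Proof. by []. Qed.

Theorem mainTheorem3 (R : realType) (Xi : 'M[R]_(3 + 3, 3))
    (Rm : 'M[R]_3) (p : 'cV[R]_3) (U1 U2 : 'M[R]_3) :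
  let alpha (j : 'I_3) := col j (usubmx Xi) in
  let beta (j : 'I_3) := col j (dsubmx Xi) in
  vnorm (alpha i0) != 0 ->
  cross (alpha i0) (alpha i1) != 0 ->
  is_SO3 Rm -> upper_tri U1 -> upper_tri U2 ->
  0 < U1 i0 i0 -> 0 < U1 i1 i1 ->
  Xi = screw_mx Rm p *m col_mx U1 U2 ->
  let r (j : 'I_3) := col j Rm in
  let q1 := axis_point (alpha i0) (beta i0) in
  let e1 := axis_dir (alpha i0) in
  let q2 := axis_point (alpha i1) (beta i1) in
  let e2 := axis_dir (alpha i1) in
  [/\ (* (1) *) parallel (r i0) e1,
      (* (2) *) (exists q d, common_normal q1 e1 q2 e2 q d) /\
                (forall q d, common_normal q1 e1 q2 e2 q d -> parallel (r i2) d),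
      (* (3) *) on_line q1 e1 p
    & (* (4) *) forall q d, common_normal q1 e1 q2 e2 q d ->
                  on_line q1 e1 p /\ on_line q d p].
Proof.
move=> alpha beta Hn Hc [HO Hdet] HU1 HU2 Hu0 Hu1 HXi r q1 e1 q2 e2.
have hU : usubmx Xi = Rm *m U1.
  by rewrite HXi /screw_mx mul_block_col mul0mx addr0 col_mxKu.
have hD : dsubmx Xi = Defs.skew p *m Rm *m U1 + Rm *m U2.
  by rewrite HXi /screw_mx mul_block_col col_mxKd.
have ha j : alpha j = U1 i0 j *: r i0 + U1 i1 j *: r i1 + U1 i2 j *: r i2.
  by rewrite /alpha hU col_mulmx mulmx_col3 !mxE.
have ha' j : alpha j = Rm *m col j U1 by rewrite /alpha hU col_mulmx.
have hb j : beta j = cross p (alpha j) + (U2 i0 j *: r i0 + U2 i1 j *: r i1 + U2 i2 j *: r i2).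
  by rewrite /beta hD col_addmx !col_mulmx -mulmxA -ha' [Rm *m col j U2]mulmx_col3 !mxE.
have hrr i j : dot (r i) (r j) = (i == j)%:R by rewrite -trmx_mul_dot HO mxE.
have d00 := hrr i0 i0. have d01 := hrr i0 i1. have d02 := hrr i0 i2.
have d10 := hrr i1 i0. have d11 := hrr i1 i1. have d12 := hrr i1 i2.
have d20 := hrr i2 i0. have d21 := hrr i2 i1. have d22 := hrr i2 i2.
rewrite /= in d00 d01 d02 d10 d11 d12 d20 d21 d22.
have cmp v : v = dot (r i0) v *: r i0 + dot (r i1) v *: r i1 + dot (r i2) v *: r i2.
  exact: complete.
have z10 : U1 i1 i0 = 0 := HU1 i1 i0 isT.
have z20 : U1 i2 i0 = 0 := HU1 i2 i0 isT.
have z21 : U1 i2 i1 = 0 := HU1 i2 i1 isT.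
have w10 : U2 i1 i0 = 0 := HU2 i1 i0 isT.
have w20 : U2 i2 i0 = 0 := HU2 i2 i0 isT.
have w21 : U2 i2 i1 = 0 := HU2 i2 i1 isT.
have A1 : alpha i0 = U1 i0 i0 *: r i0 by rewrite ha z10 z20 !scale0r !addr0.
have B1 : beta i0 = cross p (alpha i0) + U2 i0 i0 *: r i0.
  by rewrite hb w10 w20 !scale0r !addr0.
have A2 : alpha i1 = U1 i0 i1 *: r i0 + U1 i1 i1 *: r i1 by rewrite ha z21 scale0r addr0.
have B2 : beta i1 = cross p (alpha i1) + (U2 i0 i1 *: r i0 + U2 i1 i1 *: r i1).
  by rewrite hb w21 scale0r addr0.
clear ha hb ha' hD hU.
move: Hu0 Hu1 A1 B1 A2 B2.
set u := U1 i0 i0; set w := U2 i0 i0; set x := U1 i0 i1; set y := U1 i1 i1;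
  set x' := U2 i0 i1; set y' := U2 i1 i1.
move=> Hu0 Hu1 A1 B1 A2 B2.
have vn1 : vnorm (alpha i0) = u.
  by rewrite /vnorm A1 dotZl dotZr d00 mulr1 -expr2 sqrtr_sqr gtr0_norm.
have E1 : e1 = r i0.
  by rewrite /e1 /axis_dir vn1 A1 scalerA mulVf ?scale1r // gt_eqF.
have Q1 : q1 = p - dot (r i0) p *: r i0.
  rewrite /q1 /axis_point vn1 B1 A1 crossDr !crossZr !crossZl cross_aa !scaler0 addr0.
  rewrite bac_cab d00 scale1r dotC !scalerA -expr2 mulVf ?scale1r //.
  by rewrite expf_neq0 // gt_eqF.
have P3 : on_line q1 e1 p.
  by exists (dot (r i0) p); rewrite Q1 E1 subrK.
set n2 := dot (alpha i1) (alpha i1).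
have N2 : n2 = x ^+ 2 + y ^+ 2.
  rewrite /n2 A2 !dotDl !dotDr !dotZl !dotZr d00 d01 d10 d11; ring.
have n2gt0 : 0 < n2 by rewrite N2 ltr_wpDl ?sqr_ge0 // exprn_gt0.
set s := vnorm (alpha i1).
have S2 : s ^+ 2 = n2 by rewrite /s /vnorm sqr_sqrtr // ltW.
have s0 : s != 0.
  by apply/eqP => h; move: S2; rewrite h expr0n /= => h2; move: n2gt0; rewrite -h2 ltxx.
set v2 := x' *: r i0 + y' *: r i1.
set c := (s ^+ 2)^-1 *: cross (alpha i1) v2.
set k := (s ^+ 2)^-1 * dot (alpha i1) p.
set c2 := dot (r i2) c.
have C0 : dot (r i0) c = 0 by rewrite dotC /c dotZl A2 /v2 span_cross0 mulr0.
have C1 : dot (r i1) c = 0 by rewrite dotC /c dotZl A2 /v2 span_cross1 mulr0.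
have HC : c = c2 *: r i2 by rewrite {1}(cmp c) C0 C1 !scale0r !add0r.
have Q2 : q2 = p - k *: (alpha i1) + c2 *: r i2.
  rewrite /q2 /axis_point -/s B2 -/v2 crossDr bac_cab -/n2 -HC /c /k S2.
  move: (cross (alpha i1) v2) => C; apply: vec3_eq; rewrite !mxE; field.
  all: try by rewrite (gt_eqF n2gt0).
have E2 : e2 = s^-1 *: (alpha i1) by [].
have r2n0 : r i2 != 0.
  by apply/eqP => h; move: d22; rewrite h dot0r => /eqP; rewrite eq_sym oner_eq0.
have P1 : parallel (r i0) e1 by exists 1; rewrite E1 scale1r.
have uniq_d : forall q d, common_normal q1 e1 q2 e2 q d ->
    [/\ dot (r i0) d = 0, dot (r i1) d = 0 & d = dot (r i2) d *: r i2].
  move=> q d [hd0 hd1 hd2 _ _].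
  have dr0 : dot (r i0) d = 0 by rewrite dotC -E1.
  have dA2 : dot d (alpha i1) = 0.
    by move: hd2; rewrite E2 dotZr => /eqP; rewrite mulf_eq0 invr_eq0 (negPf s0) /= => /eqP.
  have dr1 : dot (r i1) d = 0.
    move: dA2; rewrite A2 dotDr !dotZr (dotC d (r i0)) dr0 mulr0 add0r => /eqP.
    by rewrite mulf_eq0 gt_eqF //= dotC => /eqP.
  by split => //; rewrite {1}(cmp d) dr0 dr1 !scale0r !add0r.
split => //.
- split.
  + exists p, (r i2); split => //.
    * by rewrite E1 d20.
    * by rewrite E2 dotZr A2 dotDr !dotZr d20 d21 !mulr0 addr0 mulr0.
    * by exists p; split => //; exists 0; rewrite scale0r addr0.
    exists (p + c2 *: r i2); split; last by exists c2.
    exists (k * s); rewrite Q2 E2; apply: vec3_eq; rewrite !mxE; field; exact: s0.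
  move=> q d hcn; have [dr0 dr1 hdd] := uniq_d q d hcn.
  have nz : dot (r i2) d != 0.
    apply/eqP => h; case: hcn => /eqP hd0 _ _ _ _; apply: hd0.
    by rewrite hdd h scale0r.
  by exists (dot (r i2) d)^-1; rewrite {2}hdd scalerA mulVf // scale1r.
move=> q d hcn; split => //.
have [dr0 dr1 hdd] := uniq_d q d hcn.
case: hcn => _ _ _ [X [[t1 hx1] [t2 hx2]]] [Y [[t3 hy1] [t4 hy2]]].
have eX0 : dot (r i0) X = dot (r i0) q by rewrite hx2 dotDr dotZr dr0 mulr0 addr0.
have eX1 : dot (r i1) X = dot (r i1) q by rewrite hx2 dotDr dotZr dr1 mulr0 addr0.
have eY0 : dot (r i0) Y = dot (r i0) q by rewrite hy2 dotDr dotZr dr0 mulr0 addr0.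
have eY1 : dot (r i1) Y = dot (r i1) q by rewrite hy2 dotDr dotZr dr1 mulr0 addr0.
have fX0 : dot (r i0) X = t1.
  by rewrite hx1 Q1 E1 !dotDr dotNr !dotZr d00; ring.
have fX1 : dot (r i1) X = dot (r i1) p.
  by rewrite hx1 Q1 E1 !dotDr dotNr !dotZr d10; ring.
have fY0 : dot (r i0) Y = dot (r i0) p + (t3 / s - k) * x.
  by rewrite hy1 Q2 E2 A2 !dotDr dotNr !dotZr !dotDr !dotZr d00 d01 d02; ring.
have fY1 : dot (r i1) Y = dot (r i1) p + (t3 / s - k) * y.
  by rewrite hy1 Q2 E2 A2 !dotDr dotNr !dotZr !dotDr !dotZr d10 d11 d12; ring.
have m0 : t3 / s - k = 0.
  have : (t3 / s - k) * y = 0.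
    by apply: (addrI (dot (r i1) p)); rewrite addr0 -fY1 eY1 -eX1 fX1.
  by move/eqP; rewrite mulf_eq0 (gt_eqF Hu1) orbF => /eqP.
have ht1 : t1 = dot (r i0) p by rewrite -fX0 eX0 -eY0 fY0 m0 mul0r addr0.
have XP : X = p by rewrite hx1 Q1 E1 ht1 subrK.
by exists t2; rewrite -XP.
Qed.
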